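(* Let $\mathcal{F}$ be a linear $3$-uniform family and let $\mathcal{M}$ be a maximum matching of $\mathcal{F}$. If $A,B,C$ are three distinct members of $\mathcal{M}$ and $|D_2(A,B)|=8$, then $|D_2(A,C)|+|D_2(B,C)|\leq 12$.
   Context: A family is a finite collection of distinct subsets of a vertex set; $3$-uniform means every member has exactly $3$ elements and linear means any two distinct members share at most one vertex. A matching is a collection of pairwise disjoint members; a maximum matching is one of largest possible size. $X_{\mathcal{M}}=\bigcup_{A\in\mathcal{M}}A$, $D_2(\mathcal{F})=\{E\in\mathcal{F}:|E\cap X_{\mathcal{M}}|=2\}$, and for $A,B\in\mathcal{M}$, $D_2(A,B)=\{E\in D_2(\mathcal{F}): E\cap A\neq\emptyset,\ E\cap B\neq\emptyset\}$. *)

(* Defs.v *)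
From mathcomp Require Import all_boot.
Set Implicit Arguments. Unset Strict Implicit. Unset Printing Implicit Defensive.

Section Defs.
Variable T : finType.

Definition uniform3 (F : {set {set T}}) : Prop :=
  forall E, E \in F -> #|E| = 3.

Definition linear_family (F : {set {set T}}) : Prop :=
  forall E1 E2, E1 \in F -> E2 \in F -> E1 != E2 -> #|E1 :&: E2| <= 1.

Definition is_matching (F M : {set {set T}}) : Prop :=
  M \subset F /\
  forall A B, A \in M -> B \in M -> A != B -> [disjoint A & B].

Definition is_maximum_matching (F M : {set {set T}}) : Prop :=
  is_matching F M /\ forall M', is_matching F M' -> #|M'| <= #|M|.

Definition XM (M : {set {set T}}) : {set T} := \bigcup_(A in M) A.

Definition D2 (F M : {set {set T}}) : {set {set T}} :=
  [set E in F | #|E :&: XM M| == 2].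

Definition D2AB (F M : {set {set T}}) (A B : {set T}) : {set {set T}} :=
  [set E in D2 F M | (E :&: A != set0) && (E :&: B != set0)].

End Defs.

(* Main.v *)
Require Import Defs.
From mathcomp Require Import all_boot.
Set Implicit Arguments. Unset Strict Implicit. Unset Printing Implicit Defensive.

Definition edge := (nat * nat * nat)%type.
Definition e0 : edge := (0,0,0).
Definition fam (e : edge) := e.1.1.
Definition eu (e : edge) := e.1.2.
Definition ev (e : edge) := e.2.

Definition share (e f : edge) :=
  [|| eu e == eu f, eu e == ev f, ev e == eu f | ev e == ev f].

Fixpoint hasl (p : nat -> bool) (s : seq nat) : bool :=
  if s is x :: s' then (if p x then true else hasl p s') else false.

Lemma haslE p s : hasl p s = has p s.
Proof. by elim: s => //= x s ->; case: (p x). Qed.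

Section Bad.
Variable es : seq edge.
Variable eq : nat -> nat -> bool.
Definition Ed i := nth e0 es i.
Definition compat i j := ~~ share (Ed i) (Ed j) && ~~ eq i j.
Definition badcore k :=
  if hasl (fun i => eq i k && share (Ed i) (Ed k)) (iota 0 k) then true else
  let D := [seq i <- iota 0 k | compat i k] in
  hasl (fun i => let D2 := [seq j <- D | (j < i) && compat j i] in
     if hasl (fun j => (fam (Ed i) == fam (Ed k)) && (fam (Ed j) == fam (Ed k))) D2 then true else
     hasl (fun j => hasl (fun l => (l < j) && compat l j) D2) D2) D.
End Bad.

Definition guard (k : nat) (eq : nat -> nat -> bool) i j := [&& i <= k, j <= k & eq i j].
Definition badk es eq k := badcore es (guard k eq) k.
Definition eqcs (cs : seq nat) i j := nth 0 cs i == nth 0 cs j.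
Definition cand (cs : seq nat) k := rcons [seq r <- iota 0 k | nth 0 cs r == r] k.

Fixpoint search (fuel : nat) (es : seq edge) (cs : seq nat) : bool :=
  match fuel with
  | 0 => false
  | fuel'.+1 =>
    let k := size cs in
    all (fun c => let cs' := rcons cs c in
                  if badk es (eqcs cs') k then true else search fuel' es cs')
        (cand cs k)
  end.

Lemma searchP es fuel cs full :
  search fuel es cs -> size full = size cs + fuel -> cs = take (size cs) full ->
  (forall k, size cs <= k < size full -> nth 0 full k \in cand (take k full) k) ->
  (forall k, size cs <= k < size full -> ~~ badk es (eqcs (take k.+1 full)) k) -> False.
Proof.
elim: fuel cs => [|fuel IH] cs //= Hs Hsz Hcs Hc Hb.
have Hk : size cs < size full by rewrite Hsz addnS ltnS leq_addr.
have Hk1 : size cs <= size cs < size full by rewrite leqnn.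
have Ht : take (size cs).+1 full = rcons cs (nth 0 full (size cs)) by rewrite (take_nth 0 Hk) -Hcs.
have Hc' := Hc _ Hk1; rewrite -Hcs in Hc'.
move/allP: Hs => /(_ _ Hc').
case: ifP => [Hbad _| _ Hs].
  by move: (Hb _ Hk1); rewrite Ht Hbad.
apply: (IH _ Hs).
- by rewrite size_rcons Hsz addSnnS.
- by rewrite size_rcons Ht.
- by move=> k /andP[Hk2 Hk3]; apply: Hc; rewrite Hk3 andbT; rewrite size_rcons in Hk2; exact: ltnW.
- by move=> k /andP[Hk2 Hk3]; apply: Hb; rewrite Hk3 andbT; rewrite size_rcons in Hk2; exact: ltnW.
Qed.

Fixpoint blists (n : nat) : seq (seq bool) :=
  if n is n'.+1 then [seq b :: s | b <- [:: true; false], s <- blists n'] else [:: [::]].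

Lemma blistsP (s : seq bool) : s \in blists (size s).
Proof.
elim: s => [|b s IH] //=.
rewrite /= !mem_cat; case: b; apply/orP; [left|right; apply/orP; left]; apply/mapP; by exists s.
Qed.

Definition sAB := [seq k <- iota 0 9 | k != 8].
Definition mk_es (sAC : seq nat) (j : nat) : seq edge :=
  [seq (0, k %/ 3, 3 + k %% 3) | k <- sAB] ++ (2, 3 + j, 6) ::
  [seq (1, k %/ 3, 6 + k %% 3) | k <- sAC].

Definition wfe (e : edge) :=
  match fam e with
  | 0 => (eu e < 3) && (3 <= ev e < 6)
  | 1 => (eu e < 3) && (6 <= ev e < 9)
  | 2 => (3 <= eu e < 6) && (6 <= ev e < 9)
  | _ => false
  end.
Definition wfes (es : seq edge) := all wfe es && uniq [seq (eu e, ev e) | e <- es].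

Definition bigcheck :=
  all (fun m => let s := [seq k <- iota 0 9 | nth false m k] in
        if 7 <= size s then all (fun j => let es := mk_es s j in wfes es && search (size es) es [::]) (iota 0 3) else true)
    (blists 9).

Lemma bigcheck_ok : bigcheck = true.
Proof. vm_compute. reflexivity. Qed.

From Stdlib Require Import FunctionalExtensionality.
From mathcomp Require Import zify.

Section Gen.
Variables (T : finType) (F M : {set {set T}}).
Hypotheses (HU : uniform3 F) (HL : linear_family F) (HM : is_maximum_matching F M).

Lemma MF : M \subset F. Proof. by case: HM => [[]]. Qed.
Lemma disjM D1 D2 : D1 \in M -> D2 \in M -> D1 != D2 -> [disjoint D1 & D2].
Proof. by case: HM => [[_ H] _]; apply: H. Qed.
Lemma subX D : D \in M -> D \subset XM M.
Proof. by move=> HD; apply: (bigcup_sup D HD). Qed.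

Lemma augment (N S : {set {set T}}) : N \subset M -> S \subset F ->
  (forall s1 s2, s1 \in S -> s2 \in S -> s1 != s2 -> [disjoint s1 & s2]) ->
  (forall s, s \in S -> s != set0) ->
  (forall s D, s \in S -> D \in M -> D \notin N -> [disjoint s & D]) ->
  #|N| < #|S| -> False.
Proof.
move=> HN HS Hd Hne Hout Hc.
set M' := (M :\: N) :|: S.
have Hm : is_matching F M'.
  split.
    rewrite subUset HS andbT; apply: subset_trans MF; exact: subsetDl.
  move=> P Q; rewrite !inE => /orP[/andP[HPN HPM]|HPS] /orP[/andP[HQN HQM]|HQS] HPQ.
  - exact: disjM.
  - by rewrite disjoint_sym; apply: Hout.
  - by apply: Hout.
  - exact: Hd.
have Hdis : [disjoint M :\: N & S].
  apply/pred0P => s /=; apply/negP => /andP[]; rewrite inE => /andP[HsN HsM] HsS.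
  have := Hout s s HsS HsM HsN; rewrite -setI_eq0 setIid => /eqP Hs0.
  by move: (Hne s HsS); rewrite Hs0 eqxx.
have := HM.2 _ Hm.
rewrite /M' cardsU (disjoint_setI0 Hdis) cards0 subn0 cardsD.
rewrite (setIidPr HN).
have : #|N| <= #|M| by apply: subset_leq_card.
lia.
Qed.

Lemma two_common E1 E2 x y : E1 \in F -> E2 \in F -> x != y ->
  x \in E1 -> x \in E2 -> y \in E1 -> y \in E2 -> E1 = E2.
Proof.
move=> H1 H2 Hxy hx1 hx2 hy1 hy2; apply/eqP; apply/negPn/negP => Hne.
have := HL H1 H2 Hne.
have : [set x; y] \subset E1 :&: E2.
  by apply/subsetP => z; rewrite !inE => /orP[]/eqP->; rewrite ?hx1 ?hx2 ?hy1 ?hy2.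
move/subset_leq_card; rewrite cards2 Hxy => H1' H2'.
by have := leq_trans H1' H2'.
Qed.

Variable x0 : T.
Definition pk (E P : {set T}) := odflt x0 [pick z in E :&: P].
Lemma pkP E P : E :&: P != set0 -> pk E P \in E /\ pk E P \in P.
Proof.
rewrite /pk; case: pickP => [z|H]; first by rewrite inE => /andP[].
by case/set0Pn => z Hz; move: (H z); rewrite Hz.
Qed.

Definition presP (x y : T) := [exists E in D2 F M, (x \in E) && (y \in E)].

Lemma D2AB_le P Q : P \in M -> Q \in M -> P != Q ->
  #|D2AB F M P Q| <= #|[set p in setX P Q | presP p.1 p.2]|.
Proof.
move=> HP HQ HPQ.
set phi := fun E => (pk E P, pk E Q).
have Hmem E : E \in D2AB F M P Q ->
   [/\ E \in D2 F M, pk E P \in E, pk E P \in P, pk E Q \in E & pk E Q \in Q].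
  rewrite inE => /andP[HE /andP[H1 H2]].
  by case: (pkP H1) => ? ?; case: (pkP H2) => ? ?.
have Hinj : {in D2AB F M P Q &, injective phi}.
  move=> E1 E2 /Hmem[HE1 a1 a2 a3 a4] /Hmem[HE2 b1 b2 b3 b4] [] e1 e2.
  move: HE1 HE2; rewrite !inE => /andP[HF1 _] /andP[HF2 _].
  apply: (two_common (x:=pk E1 P) (y:=pk E1 Q)) => //.
  - apply/eqP => Hxy; have := disjM HP HQ HPQ.
    by move/disjoint_setI0/setP/(_ (pk E1 P)); rewrite !inE a2 /= Hxy a4.
  - by rewrite e1.
  - by rewrite e2.
rewrite -(card_in_imset Hinj); apply: subset_leq_card; apply/subsetP => p /imsetP[E HE ->].
case: (Hmem E HE) => HE' a1 a2 a3 a4.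
rewrite !inE /= a2 a4 /=; apply/existsP; exists E; by rewrite HE' a1 a3.
Qed.

Lemma notin2 D1 D2 y : D1 \in M -> D2 \in M -> D1 != D2 -> y \in D1 -> y \in D2 -> False.
Proof.
move=> H1 H2 H12 y1 y2; have := disjM H1 H2 H12.
by move/disjoint_setI0/setP/(_ y); rewrite !inE y1 y2.
Qed.

Variables (A B C : {set T}).
Hypotheses (HA : A \in M) (HB : B \in M) (HC : C \in M) (HAB : A != B) (HAC : A != C) (HBC : B != C).
Variables (sA sB sC : seq T).
Hypotheses (sAu : uniq sA) (sBu : uniq sB) (sCu : uniq sC)
  (sAs : size sA = 3) (sBs : size sB = 3) (sCs : size sC = 3)
  (sAm : forall y, (y \in sA) = (y \in A)) (sBm : forall y, (y \in sB) = (y \in B))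
  (sCm : forall y, (y \in sC) = (y \in C)).

Definition vtx n := if n < 3 then nth x0 sA n else if n < 6 then nth x0 sB (n - 3) else nth x0 sC (n - 6).
Definition grp n := if n < 3 then A else if n < 6 then B else C.

Lemma grpM n : grp n \in M.
Proof. by rewrite /grp; case: ifP => _ //; case: ifP. Qed.

Lemma vtx_grp n : n < 9 -> vtx n \in grp n.
Proof.
move=> Hn; rewrite /vtx /grp; case: ifP => H1; first by rewrite -sAm mem_nth // sAs.
case: ifP => H2; first by rewrite -sBm mem_nth // sBs; lia.
by rewrite -sCm mem_nth // sCs; lia.
Qed.

Lemma vtxX n : n < 9 -> vtx n \in XM M.
Proof. by move=> Hn; apply: (subsetP (subX (grpM n))); apply: vtx_grp. Qed.

Lemma vtx_inj n m : n < 9 -> m < 9 -> vtx n = vtx m -> n = m.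
Proof.
move=> Hn Hm Hv.
have Hg : grp n = grp m.
  apply/eqP/negPn/negP => Hne.
  by apply: (notin2 (grpM n) (grpM m) Hne (vtx_grp Hn)); rewrite Hv vtx_grp.
move: Hv Hg; rewrite /vtx /grp.
case: (ltnP n 3) => H1; case: (ltnP m 3) => H2.
- by move/eqP; rewrite nth_uniq ?sAs // => /eqP.
- by case: ifP => _ _ /eqP; rewrite ?(negbTE HAB) ?(negbTE HAC).
- by case: ifP => _ _ /eqP; rewrite eq_sym ?(negbTE HAB) ?(negbTE HAC).
case: (ltnP n 6) => H3; case: (ltnP m 6) => H4.
- by move/eqP; rewrite nth_uniq ?sBs //; try lia; move/eqP; lia.
- by move=> _ /eqP; rewrite (negbTE HBC).
- by move=> _ /eqP; rewrite eq_sym (negbTE HBC).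
- by move/eqP; rewrite nth_uniq ?sCs //; try lia; move/eqP; lia.
Qed.

Definition redge (e : edge) := odflt set0 [pick E in D2 F M | (vtx (eu e) \in E) && (vtx (ev e) \in E)].
Definition col (e : edge) := odflt x0 [pick y in redge e | y \notin XM M].
Definition present (e : edge) :=
  exists E, [/\ E \in D2 F M, vtx (eu e) \in E & vtx (ev e) \in E].

Lemma wfe_b e : wfe e -> eu e < ev e /\ ev e < 9.
Proof. rewrite /wfe; case: (fam e) => [|[|[|]]] //=.
- move=> /andP[H1 /andP[H2 H3]]; lia.
- move=> /andP[H1 /andP[H2 H3]]; lia.
- move=> /andP[/andP[H1 H4] /andP[H2 H3]]; lia.
Qed.

Lemma edgeP e : wfe e -> present e ->
  [/\ redge e \in F, col e \notin XM M &
     forall y, (y \in redge e) = [|| y == vtx (eu e), y == vtx (ev e) | y == col e]].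
Proof.
move=> Hw Hp; case: (wfe_b Hw) => Hlt H9.
have [HD hu hv] : [/\ redge e \in D2 F M, vtx (eu e) \in redge e & vtx (ev e) \in redge e].
  rewrite /redge; case: pickP => [E /andP[H1 /andP[H2 H3]] //|H].
  by case: Hp => E [H1 H2 H3]; move: (H E); rewrite H1 H2 H3.
move: HD; rewrite inE => /andP[HF /eqP Hc2].
set E := redge e in HF Hc2 hu hv *.
set u := vtx (eu e); set v := vtx (ev e).
have Hu9 : eu e < 9 := ltn_trans Hlt H9.
have Huv : u != v by apply/eqP => /(vtx_inj Hu9 H9) H; rewrite H ltnn in Hlt.
have HEX : E :&: XM M = [set u; v].
  apply/eqP; rewrite eq_sym eqEcard cards2 Huv Hc2 leqnn andbT.
  by apply/subsetP => z; rewrite !inE => /orP[]/eqP->; rewrite ?hu ?hv vtxX.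
have : #|E :\: XM M| == 1.
  by have := cardsID (XM M) E; rewrite (HU HF) Hc2 => /eqP; rewrite -[3]/(2+1) eqn_add2l.
case/cards1P => w Hw'.
have Hw1 : w \in E :\: XM M by rewrite Hw' set11.
have Hcol : col e = w.
  rewrite /col; case: pickP => [z Hz|H].
    by apply/set1P; rewrite -Hw' inE andbC.
  by move: (H w) Hw1; rewrite inE andbC => ->.
have HwX : w \notin XM M by move: Hw1; rewrite inE => /andP[].
split => //; first by rewrite Hcol.
move=> y; rewrite Hcol.
case Hy: (y \in XM M).
  have : (y \in E :&: XM M) = (y \in E) by rewrite inE Hy andbT.
  move=> <-; rewrite HEX !inE.
  by case: (y == w) / eqP => [Hyw|]; [rewrite -Hyw Hy in HwX | rewrite orbF].
have : (y \in E :\: XM M) = (y \in E) by rewrite inE Hy.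
move=> <-; rewrite Hw' !inE.
have -> : (y == u) = false by apply/eqP => Hyu; move: Hy; rewrite Hyu vtxX.
have -> : (y == v) = false by apply/eqP => Hyu; move: Hy; rewrite Hyu vtxX.
done.
Qed.
Variable es : seq edge.
Hypotheses (Hwf : wfes es) (Hpres : forall e, e \in es -> present e).

Definition R i := redge (Ed es i).
Definition cl i := col (Ed es i).
Definition uu i := eu (Ed es i).
Definition vv i := ev (Ed es i).

Lemma wfi i : i < size es -> wfe (Ed es i).
Proof. by move=> Hi; case/andP: Hwf => /allP H _; apply: H; rewrite mem_nth. Qed.

Lemma Rp i : i < size es ->
  [/\ R i \in F, cl i \notin XM M, uu i < vv i, vv i < 9 &
     forall y, (y \in R i) = [|| y == vtx (uu i), y == vtx (vv i) | y == cl i]].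
Proof.
move=> Hi; have Hw := wfi Hi; case: (wfe_b Hw) => H1 H2.
case: (edgeP Hw (Hpres (mem_nth e0 Hi))) => H3 H4 H5; by split.
Qed.

Lemma disjR i j : i < size es -> j < size es -> ~~ share (Ed es i) (Ed es j) -> cl i != cl j ->
  [disjoint R i & R j].
Proof.
move=> Hi Hj Hsh Hc.
case: (Rp Hi) => _ Xi ui vi Mi; case: (Rp Hj) => _ Xj uj vj Mj.
have ui9 : uu i < 9 := ltn_trans ui vi.
have uj9 : uu j < 9 := ltn_trans uj vj.
apply/pred0P => y /=; rewrite Mi Mj.
apply/negP => /andP[H1 H2].
case/or3P: H1 => /eqP Hy; case/or3P: H2 => /eqP Hy'; rewrite Hy in Hy'.
all: first [ by move: Xj; rewrite -Hy' vtxX | by move: Xi; rewrite Hy' vtxX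
           | by rewrite Hy' eqxx in Hc
           | have E := vtx_inj ui9 uj9 Hy' | have E := vtx_inj ui9 vj Hy'
           | have E := vtx_inj vi uj9 Hy' | have E := vtx_inj vi vj Hy' ].
all: by move: Hsh; rewrite /uu /vv in E; rewrite /share E eqxx ?orbT.
Qed.
Lemma cells_uniq i k : i < size es -> k < size es -> i != k ->
  (uu i, vv i) != (uu k, vv k).
Proof.
move=> Hi Hk Hik; case/andP: Hwf => _ Hu.
have := nth_uniq (eu e0, ev e0) _ _ Hu; rewrite size_map => /(_ i k Hi Hk).
by rewrite !(nth_map e0) // => ->.
Qed.

Lemma memR i k a : i < size es -> k < size es -> a < 9 -> vtx a \in R k -> (a == uu k) || (a == vv k).
Proof.
move=> Hi Hk Ha; case: (Rp Hk) => _ Xk uk vk Mk.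
rewrite Mk => /or3P[]/eqP H.
- by rewrite (vtx_inj Ha (ltn_trans uk vk) H) eqxx.
- by rewrite (vtx_inj Ha vk H) eqxx orbT.
- by move: Xk; rewrite -H vtxX.
Qed.

Lemma lin_ok i k : i < size es -> k < size es -> i != k -> share (Ed es i) (Ed es k) -> cl i = cl k -> False.
Proof.
move=> Hi Hk Hik Hsh Hc.
case: (Rp Hi) => Fi Xi ui vi Mi; case: (Rp Hk) => Fk Xk uk vk Mk.
have ui9 : uu i < 9 := ltn_trans ui vi.
have uk9 : uu k < 9 := ltn_trans uk vk.
have [a [Ha Hai Hak]] : exists a, [/\ a < 9, vtx a \in R i & vtx a \in R k].
  move: Hsh; rewrite /share -/(uu i) -/(vv i) -/(uu k) -/(vv k).
  case/or4P => /eqP E.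
  - by exists (uu i); rewrite Mi Mk E !eqxx ?orbT; split.
  - by exists (uu i); rewrite Mi Mk E !eqxx ?orbT; split.
  - by exists (vv i); rewrite Mi Mk E !eqxx ?orbT; split.
  - by exists (vv i); rewrite Mi Mk E !eqxx ?orbT; split.
have Hci : cl i \in R i by rewrite Mi eqxx !orbT.
have Hck : cl i \in R k by rewrite Mk Hc eqxx !orbT.
have Hne : vtx a != cl i by apply/eqP => E; move: Xi; rewrite -E vtxX.
have ER := two_common Fi Fk Hne Hai Hak Hci Hck.
have h1 : vtx (uu i) \in R k by rewrite -ER Mi eqxx.
have h2 : vtx (vv i) \in R k by rewrite -ER Mi eqxx orbT.
have h3 : vtx (uu k) \in R i by rewrite ER Mk eqxx.
move: (memR Hi Hk ui9 h1) (memR Hi Hk vi h2) (memR Hk Hi uk9 h3) (cells_uniq Hi Hk Hik).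
move: ui uk; clear; move=> ui uk.
case/orP => /eqP e1; case/orP => /eqP e2; case/orP => /eqP e3; rewrite ?e1 ?e2 ?eqxx //; lia.
Qed.
Lemma Rout i D : i < size es -> D \in M -> D != grp (uu i) -> D != grp (vv i) -> [disjoint R i & D].
Proof.
move=> Hi HD H1 H2; case: (Rp Hi) => _ Xi ui vi Mi.
apply/pred0P => y /=; rewrite Mi; apply/negP => /andP[/or3P[]/eqP -> HyD].
- by apply: (notin2 (grpM (uu i)) HD _ (vtx_grp (ltn_trans ui vi)) HyD); rewrite eq_sym.
- by apply: (notin2 (grpM (vv i)) HD _ (vtx_grp vi) HyD); rewrite eq_sym.
- by move: Xi; rewrite (subsetP (subX HD)).
Qed.

Lemma Rne i : i < size es -> R i != set0.
Proof.
move=> Hi; case: (Rp Hi) => _ _ _ _ Mi; apply/set0Pn; exists (cl i); by rewrite Mi eqxx !orbT.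
Qed.

Lemma aug_idx (N : {set {set T}}) (ix : seq nat) : N \subset M -> all (fun i => i < size es) ix ->
  uniq ix ->
  (forall i j, i \in ix -> j \in ix -> i != j -> ~~ share (Ed es i) (Ed es j) && (cl i != cl j)) ->
  (forall i D, i \in ix -> D \in M -> D \notin N -> [disjoint R i & D]) ->
  #|N| < size ix -> False.
Proof.
move=> HN /allP Hsz Hu Hc Hout Hlt.
have Hinj : {in ix &, injective R}.
  move=> i j Hi Hj ERij; apply/eqP/negPn/negP => Hij.
  case/andP: (Hc i j Hi Hj Hij) => H1 H2.
  have := disjR (Hsz i Hi) (Hsz j Hj) H1 H2; rewrite -ERij -setI_eq0 setIid.
  by rewrite (negbTE (Rne (Hsz i Hi))).
apply: (@augment N [set x in map R ix]) => //.
- apply/subsetP => x; rewrite inE => /mapP[i Hi ->]; by case: (Rp (Hsz i Hi)).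
- move=> s1 s2; rewrite !inE => /mapP[i Hi ->] /mapP[j Hj ->] Hne.
  have Hij : i != j by apply/eqP => E; rewrite E eqxx in Hne.
  by case/andP: (Hc i j Hi Hj Hij) => H1 H2; apply: disjR => //; apply: Hsz.
- by move=> s; rewrite inE => /mapP[i Hi ->]; apply: Rne; apply: Hsz.
- by move=> s D; rewrite inE => /mapP[i Hi ->]; apply: Hout.
- rewrite cardsE; move: (map_inj_in_uniq Hinj); rewrite Hu => /card_uniqP ->.
  by rewrite size_map.
Qed.
Lemma grpA n : n < 3 -> grp n = A. Proof. by rewrite /grp => ->. Qed.
Lemma grpB n : 3 <= n -> n < 6 -> grp n = B. Proof. by move=> H1 H2; rewrite /grp ltnNge H1 /= H2. Qed.
Lemma grpC n : 6 <= n -> grp n = C.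
Proof. by move=> H; rewrite /grp ltnNge (leq_trans _ H) //= ltnNge H. Qed.

Lemma fam_grp e f : wfe e -> wfe f -> fam e = fam f ->
  grp (eu e) = grp (eu f) /\ grp (ev e) = grp (ev f).
Proof.
rewrite /wfe => He Hf E; rewrite E in He; case: (fam f) He Hf => [|[|[|]]] //=.
- move=> /andP[h1 /andP[h2 h3]] /andP[h4 /andP[h5 h6]].
  by rewrite (grpA h1) (grpA h4) (grpB h2 h3) (grpB h5 h6).
- move=> /andP[h1 /andP[h2 h3]] /andP[h4 /andP[h5 h6]].
  by rewrite (grpA h1) (grpA h4) (grpC h2) (grpC h5).
- move=> /andP[/andP[h1 h1'] /andP[h2 h3]] /andP[/andP[h4 h4'] /andP[h5 h6]].
  by rewrite (grpB h1 h1') (grpB h4 h4') (grpC h2) (grpC h5).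
Qed.

Definition cpt i j := ~~ share (Ed es i) (Ed es j) && (cl i != cl j).
Lemma share_sym e f : share e f = share f e.
Proof. by apply/idP/idP; rewrite /share => /or4P[]/eqP->; rewrite eqxx ?orbT. Qed.
Lemma cpt_sym i j : cpt i j -> cpt j i.
Proof. by rewrite /cpt eq_sym share_sym. Qed.
Lemma cpt_neq i j : cpt i j -> i != j.
Proof. by apply: contraTneq => ->; rewrite /cpt /share eqxx. Qed.

Lemma grp_in1 n : grp n \in [:: A; B; C].
Proof. by rewrite /grp; case: ifP => _; [|case: ifP => _]; rewrite !inE eqxx ?orbT. Qed.

Lemma quad_ok i j l k : i < size es -> j < size es -> l < size es -> k < size es ->
  cpt i j -> cpt i l -> cpt i k -> cpt j l -> cpt j k -> cpt l k -> False.
Proof.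
move=> Hi Hj Hl Hk c1 c2 c3 c4 c5 c6.
apply: (@aug_idx [set x in [:: A; B; C]] [:: i; j; l; k]).
- by apply/subsetP => x; rewrite inE !inE => /or3P[]/eqP->.
- by rewrite /= Hi Hj Hl Hk.
- by rewrite /= !inE !negb_or !cpt_neq.
- move=> a b; rewrite !inE => /or4P[]/eqP-> /or4P[]/eqP-> Hab; rewrite ?eqxx // in Hab;
  by first [done | apply: cpt_sym].
- move=> a D Ha HD HDN.
  have Ha' : a < size es by move: Ha; rewrite !inE => /or4P[]/eqP->.
  by apply: Rout => //; apply/eqP => E; move: HDN; rewrite inE E grp_in1.
- by rewrite cardsE (leq_ltn_trans (card_size _)).
Qed.
Lemma trip_ok i j k : i < size es -> j < size es -> k < size es ->
  fam (Ed es i) = fam (Ed es k) -> fam (Ed es j) = fam (Ed es k) ->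
  cpt i j -> cpt i k -> cpt j k -> False.
Proof.
move=> Hi Hj Hk f1 f2 c1 c2 c3.
apply: (@aug_idx [set x in [:: grp (uu k); grp (vv k)]] [:: i; j; k]).
- by apply/subsetP => x; rewrite inE !inE => /orP[]/eqP->; apply: grpM.
- by rewrite /= Hi Hj Hk.
- by rewrite /= !inE !negb_or !cpt_neq.
- move=> a b; rewrite !inE => /or3P[]/eqP-> /or3P[]/eqP-> Hab; rewrite ?eqxx // in Hab;
  by first [done | apply: cpt_sym].
- move=> a D Ha HD HDN.
  have [Ha' Hfa] : a < size es /\ fam (Ed es a) = fam (Ed es k).
    by move: Ha; rewrite !inE => /or3P[]/eqP->.
  case: (fam_grp (wfi Ha') (wfi Hk) Hfa) => g1 g2.
  apply: Rout => //; apply/eqP => E; move: HDN; rewrite inE !inE E ?g1 ?g2 eqxx ?orbT //.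
- by rewrite cardsE (leq_ltn_trans (card_size _)).
Qed.
Lemma haslF : hasl = @has nat.
Proof. apply: functional_extensionality => p; apply: functional_extensionality => s; exact: haslE. Qed.

Definition eqT i j := cl i == cl j.

Lemma cpt_guard k a b : a <= k -> b <= k -> compat es (guard k eqT) a b -> cpt a b.
Proof. by move=> Ha Hb; rewrite /compat /guard Ha Hb /cpt /eqT. Qed.

Lemma nobad k : k < size es -> ~~ badk es eqT k.
Proof.
move=> Hk; rewrite /badk /badcore haslF.
case: ifP => [/hasP[i]|_].
  rewrite mem_iota add0n => /andP[_ Hik] /andP[Hg Hsh].
  move: Hg; rewrite /guard (ltnW Hik) leqnn /= /eqT => /eqP Hc.
  exfalso; apply: (lin_ok (ltn_trans Hik Hk) Hk _ Hsh Hc).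
  by rewrite ltn_eqF.
apply/negP => /hasP[i]; rewrite mem_filter mem_iota add0n => /andP[Hci /andP[_ Hik]].
have Hi : i < size es := ltn_trans Hik Hk.
have cik := cpt_guard (ltnW Hik) (leqnn k) Hci.
case: ifP => [/hasP[j] | _ /hasP[j Hj] /hasP[l Hl /andP[Hlj Hclj]]].
  rewrite !mem_filter mem_iota add0n => /andP[/andP[Hji Hcji] /andP[Hcjk /andP[_ Hjk]]] /andP[/eqP f1 /eqP f2].
  have Hjs : j < size es := ltn_trans Hjk Hk.
  move=> _; apply: (trip_ok Hjs Hi Hk f2 f1) => //.
  - exact: cpt_guard (ltnW (ltn_trans Hji Hik)) (ltnW Hik) Hcji.
  - exact: cpt_guard (ltnW Hjk) (leqnn k) Hcjk.
move: Hj Hl; rewrite !mem_filter !mem_iota !add0n.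
move=> /andP[/andP[Hji Hcji] /andP[Hcjk /andP[_ Hjk]]] /andP[/andP[Hli Hcli] /andP[Hclk /andP[_ Hlk]]].
have Hjs : j < size es := ltn_trans Hjk Hk.
have Hls : l < size es := ltn_trans Hlk Hk.
apply: (quad_ok Hls Hjs Hi Hk).
- exact: cpt_guard (ltnW Hlk) (ltnW Hjk) Hclj.
- exact: cpt_guard (ltnW Hlk) (ltnW Hik) Hcli.
- exact: cpt_guard (ltnW Hlk) (leqnn k) Hclk.
- exact: cpt_guard (ltnW Hjk) (ltnW Hik) Hcji.
- exact: cpt_guard (ltnW Hjk) (leqnn k) Hcjk.
- exact: cik.
Qed.

Lemma core : search (size es) es [::] -> False.
Proof.
move=> Hs.
set cols := [seq col e | e <- es].
set full := [seq index c cols | c <- cols].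
have Hsz : size full = size es by rewrite /full !size_map.
have Hnth a : a < size es -> nth 0 full a = index (cl a) cols.
  move=> Ha; rewrite /full (nth_map x0); last by rewrite size_map.
  by rewrite /cols (nth_map e0).
have Hmem a : a < size es -> cl a \in cols.
  by move=> Ha; rewrite /cols; apply/mapP; exists (Ed es a) => //; apply: mem_nth.
apply: (searchP (full := full) Hs).
- by rewrite Hsz.
- by rewrite take0.
- move=> k /andP[_ Hk]; rewrite Hsz in Hk.
  rewrite /cand mem_rcons inE Hnth //.
  have Hle : index (cl k) cols <= k.
    have := @index_nth _ x0 k cols; rewrite size_map => /(_ Hk).
    by rewrite /cols (nth_map e0).
  rewrite leq_eqVlt in Hle; case/orP: Hle => [/eqP->|Hlt]; first by rewrite eqxx.
  apply/orP; right; rewrite mem_filter mem_iota add0n Hlt andbT.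
  rewrite nth_take // Hnth; last exact: ltn_trans Hlt Hk.
  have : nth x0 cols (index (cl k) cols) = cl k by rewrite nth_index // Hmem.
  rewrite /cols (nth_map e0); last by rewrite -(size_map col) -/cols index_mem Hmem.
  by move=> E; rewrite /cl /Ed E eqxx.
- move=> k /andP[_ Hk]; rewrite Hsz in Hk.
  have -> : badk es (eqcs (take k.+1 full)) k = badk es eqT k.
    rewrite /badk; congr badcore.
    apply: functional_extensionality => a; apply: functional_extensionality => b.
    rewrite /guard; case Ha: (a <= k) => //; case Hb: (b <= k) => //=.
    have Ha' : a < size es := leq_ltn_trans Ha Hk.
    have Hb' : b < size es := leq_ltn_trans Hb Hk.
    rewrite /eqcs !nth_take ?ltnS // !Hnth // /eqT.
    apply/eqP/eqP => [E|->] //.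
    by rewrite -(nth_index x0 (Hmem a Ha')) E nth_index // Hmem.
  exact: nobad.
Qed.
End Gen.

Lemma lastlist (T : finType) (x0 : T) (D : {set T}) x : #|D| = 3 -> x \in D ->
  let s := rem x (enum D) ++ [:: x] in
  [/\ uniq s, size s = 3, forall y, (y \in s) = (y \in D) & nth x0 s 2 = x].
Proof.
move=> HD Hx s.
have Hxe : x \in enum D by rewrite mem_enum.
have Hsz : size (rem x (enum D)) = 2 by rewrite size_rem // -cardE HD.
split.
- rewrite /s cat_uniq rem_uniq ?enum_uniq //= mem_rem_uniqF ?enum_uniq //.
- by rewrite /s size_cat Hsz.
- move=> y; rewrite /s mem_cat (mem_rem_uniq _ (enum_uniq _)) !inE mem_enum.
  by case: (y =P x) => [->|] //=; rewrite ?Hx ?orbF.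
- by rewrite /s nth_cat Hsz.
Qed.

Lemma firstlist (T : finType) (x0 : T) (D : {set T}) x : #|D| = 3 -> x \in D ->
  let s := x :: rem x (enum D) in
  [/\ uniq s, size s = 3, forall y, (y \in s) = (y \in D) & nth x0 s 0 = x].
Proof.
move=> HD Hx s.
have Hxe : x \in enum D by rewrite mem_enum.
have Hsz : size (rem x (enum D)) = 2 by rewrite size_rem // -cardE HD.
split.
- by rewrite /s /= rem_uniq ?enum_uniq // mem_rem_uniqF ?enum_uniq.
- by rewrite /s /= Hsz.
- move=> y; rewrite /s inE (mem_rem_uniq _ (enum_uniq _)) !inE mem_enum.
  by case: (y =P x) => [->|] //=.
- done.
Qed.

Section Fin.
Variables (T : finType) (F M : {set {set T}}).
Hypotheses (HU : uniform3 F) (HL : linear_family F) (HM : is_maximum_matching F M).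

Lemma missing_pair (x0 : T) P Q : P \in M -> Q \in M -> P != Q -> #|D2AB F M P Q| = 8 ->
  exists2 p, p \in setX P Q & forall q, q \in setX P Q -> q != p -> presP F M q.1 q.2.
Proof.
move=> HP HQ HPQ H8.
have HP3 : #|P| = 3 by apply: HU; apply: (subsetP (MF HM)).
have HQ3 : #|Q| = 3 by apply: HU; apply: (subsetP (MF HM)).
have Hle := D2AB_le HL HM x0 HP HQ HPQ; rewrite H8 in Hle.
set S := [set p in setX P Q | presP F M p.1 p.2] in Hle.
set Df := setX P Q :\: S.
have HD : #|Df| <= 1.
  have HSX : S \subset setX P Q by apply/subsetP => p; rewrite inE => /andP[].
  rewrite /Df cardsD (setIidPr HSX) cardsX HP3 HQ3.
  by move: Hle; clear; lia.
have Hin q : q \in setX P Q -> ~~ presP F M q.1 q.2 -> q \in Df.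
  by move=> Hq Hn; rewrite in_setD Hq andbT in_set Hq /=.
case: (set_0Vmem Df) => [H0|[p Hp]].
  have : 0 < #|setX P Q| by rewrite cardsX HP3 HQ3.
  case/card_gt0P => p Hp; exists p => // q Hq _.
  by apply: contraT => Hn; move: (Hin q Hq Hn); rewrite H0 inE.
exists p; first by move: Hp; rewrite inE => /andP[].
move=> q Hq Hqp; apply: contraT => Hn; have Hq' := Hin q Hq Hn.
by move/card_le1_eqP: HD => /(_ q p Hq' Hp) E; rewrite E eqxx in Hqp.
Qed.
Lemma L (x0 : T) A B C : A \in M -> B \in M -> C \in M -> A != B -> A != C -> B != C ->
  #|D2AB F M A B| = 8 -> 7 <= #|D2AB F M A C| -> forall E0, E0 \in D2AB F M B C -> False.
Proof.
move=> HA HB HC HAB HAC HBC H8 H7 E0 HE0.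
have HA3 : #|A| = 3 by apply: HU; apply: (subsetP (MF HM)).
have HB3 : #|B| = 3 by apply: HU; apply: (subsetP (MF HM)).
have HC3 : #|C| = 3 by apply: HU; apply: (subsetP (MF HM)).
case: (missing_pair x0 HA HB HAB H8) => [[xs ys]]; rewrite in_setX /= => /andP[Hxs Hys] Hmiss.
move: HE0; rewrite inE => /andP[HE0 /andP[h1 h2]].
case: (pkP x0 h1) => yE yB; case: (pkP x0 h2) => zE zC.
set yb := pk x0 E0 B in yE yB; set zc := pk x0 E0 C in zE zC.
case: (lastlist x0 HA3 Hxs) => uA sA3 mA nA.
case: (lastlist x0 HB3 Hys) => uB sB3 mB nB.
case: (firstlist x0 HC3 zC) => uC sC3 mC nC.
set sA := rem xs (enum A) ++ [:: xs] in uA sA3 mA nA.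
set sB := rem ys (enum B) ++ [:: ys] in uB sB3 mB nB.
set sC := zc :: rem zc (enum C) in uC sC3 mC nC.
set vt := vtx x0 sA sB sC.
have vA i : i < 3 -> vt i = nth x0 sA i by move=> Hi; rewrite /vt /vtx Hi.
have vB j : j < 3 -> vt (3 + j) = nth x0 sB j.
  by move=> Hj; rewrite /vt /vtx ltnNge leq_addr /= ltn_add2l Hj addKn.
have vC k : k < 3 -> vt (6 + k) = nth x0 sC k.
  move=> Hk; rewrite /vt /vtx.
  have -> : (6 + k < 3) = false by [].
  have -> : (6 + k < 6) = false by [].
  by rewrite addKn.
set m := [seq presP F M (vt (k %/ 3)) (vt (6 + k %% 3)) | k <- iota 0 9].
set s := [seq k <- iota 0 9 | nth false m k].
have Hnm k : k < 9 -> nth false m k = presP F M (vt (k %/ 3)) (vt (6 + k %% 3)).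
  by move=> Hk; rewrite /m (nth_map 0) ?size_iota // nth_iota.
have Hdiv k : k < 9 -> k %/ 3 < 3 by move=> Hk; rewrite ltn_divLR.
have Hs7 : 7 <= size s.
  have Hle := D2AB_le HL HM x0 HA HC HAC.
  set PAC := [set p in setX A C | presP F M p.1 p.2] in Hle.
  set code := fun p : T * T => 3 * index p.1 sA + index p.2 sC.
  have Hcode p : p \in PAC -> [/\ index p.1 sA < 3, index p.2 sC < 3,
       code p %/ 3 = index p.1 sA & code p %% 3 = index p.2 sC].
    rewrite !inE => /andP[/andP[p1 p2] _].
    have i1 : index p.1 sA < 3 by rewrite -sA3 index_mem mA.
    have i2 : index p.2 sC < 3 by rewrite -sC3 index_mem mC.
    split => //; rewrite /code mulnC.
    - by rewrite divnMDl // divn_small // addn0.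
    - by rewrite modnMDl modn_small.
  have Hu : uniq (map code (enum PAC)).
    rewrite map_inj_in_uniq ?enum_uniq // => p q; rewrite !mem_enum => Hp Hq E.
    case: (Hcode p Hp) => a1 a2 a3 a4; case: (Hcode q Hq) => b1 b2 b3 b4.
    move: Hp Hq; rewrite !inE => /andP[/andP[p1 p2] _] /andP[/andP[q1 q2] _].
    have e1 : index p.1 sA = index q.1 sA by rewrite -a3 -b3 E.
    have e2 : index p.2 sC = index q.2 sC by rewrite -a4 -b4 E.
    have idx_inj (s0 : seq T) x y : x \in s0 -> y \in s0 -> index x s0 = index y s0 -> x = y.
      by move=> hx hy Ei; rewrite -(nth_index x0 hx) Ei nth_index.
    rewrite (surjective_pairing p) (surjective_pairing q); congr pair.
    - by apply: (idx_inj sA) => //; rewrite mA.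
    - by apply: (idx_inj sC) => //; rewrite mC.
  have Hsub : {subset map code (enum PAC) <= s}.
    move=> k /mapP[p]; rewrite mem_enum => Hp ->.
    case: (Hcode p Hp) => a1 a2 a3 a4.
    have Hc9 : code p < 9 by rewrite /code; move: a1 a2; clear; lia.
    rewrite mem_filter mem_iota /= Hc9 andbT Hnm // a3 a4 vA // vC //.
    move: Hp; rewrite !inE => /andP[/andP[p1 p2] pp].
    by rewrite !nth_index ?mA ?mC.
  have := uniq_leq_size Hu Hsub; rewrite size_map -cardE => H.
  exact: leq_trans H7 (leq_trans Hle H).
have Hm : m \in blists 9 by have := blistsP m; rewrite size_map size_iota.
have := bigcheck_ok; rewrite /bigcheck => /allP /(_ m Hm).
rewrite -/s Hs7.
have Hg : index yb sB \in iota 0 3 by rewrite mem_iota /= -sB3 index_mem mB.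
move/allP/(_ _ Hg)/andP => [Hwf Hsearch].
apply: (core HU HL HM HA HB HC HAB HAC HBC uA uB uC sA3 sB3 sC3 mA mB mC Hwf _ Hsearch).
have presPP x y e : presP F M x y -> vt (eu e) = x -> vt (ev e) = y -> present F M x0 sA sB sC e.
  move=> /existsP[E /andP[HE /andP[k1 k2]]] E1 E2; exists E; split => //.
  - by rewrite /vt in E1; rewrite E1.
  - by rewrite /vt in E2; rewrite E2.
move=> e; rewrite /mk_es mem_cat => /orP[/mapP[k Hk ->]|]; last rewrite in_cons => /orP[/eqP->|/mapP[k Hk ->]].
- move: Hk; rewrite mem_filter mem_iota /= => /andP[Hk8 Hk9].
  have Hk3 : k %% 3 < 3 by rewrite ltn_mod.
  apply: (presPP (vt (k %/ 3)) (vt (3 + k %% 3))) => //.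
  apply: (Hmiss (vt (k %/ 3), vt (3 + k %% 3))).
    by rewrite in_setX /= vA ?Hdiv // vB // -mA -mB !mem_nth ?sA3 ?sB3 ?Hdiv.
  apply/eqP => [[E1 E2]].
  move: E1 E2; rewrite vA ?Hdiv // vB // -{1}nA -{1}nB.
  move/eqP; rewrite nth_uniq ?sA3 ?Hdiv // => /eqP d1.
  move/eqP; rewrite nth_uniq ?sB3 // => /eqP d2.
  by move: Hk8; rewrite (divn_eq k 3) d1 d2.
- have Hg3 : index yb sB < 3 by rewrite -sB3 index_mem mB.
  apply: (presPP yb zc).
  + by apply/existsP; exists E0; rewrite HE0 yE zE.
  + by rewrite /= vB // nth_index ?mB.
  + by rewrite /= (vC 0).
- move: Hk; rewrite mem_filter mem_iota /= => /andP[Hnk Hk9].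
  apply: (presPP (vt (k %/ 3)) (vt (6 + k %% 3))) => //.
  by rewrite -Hnm.
Qed.
End Fin.

Lemma D2AB_sym (T : finType) (F M : {set {set T}}) P Q : D2AB F M P Q = D2AB F M Q P.
Proof. by apply/setP => E; rewrite !in_set; congr andb; rewrite andbC. Qed.

Lemma D2AB_le9 (T : finType) (F M : {set {set T}}) (x0 : T) P Q :
  uniform3 F -> linear_family F -> is_maximum_matching F M ->
  P \in M -> Q \in M -> P != Q -> #|D2AB F M P Q| <= 9.
Proof.
move=> HU HL HM HP HQ HPQ.
have HP3 : #|P| = 3 by apply: HU; apply: (subsetP (MF HM)).
have HQ3 : #|Q| = 3 by apply: HU; apply: (subsetP (MF HM)).
apply: (leq_trans (D2AB_le HL HM x0 HP HQ HPQ)).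
have <- : #|setX P Q| = 9 by rewrite cardsX HP3 HQ3.
apply: subset_leq_card.
by apply/subsetP => p; rewrite inE => /andP[].
Qed.

Theorem proposition4 (T : finType) (F M : {set {set T}}) (A B C : {set T}) :
  uniform3 F -> linear_family F -> is_maximum_matching F M ->
  A \in M -> B \in M -> C \in M -> A != B -> A != C -> B != C ->
  #|D2AB F M A B| = 8 ->
  #|D2AB F M A C| + #|D2AB F M B C| <= 12.
Proof.
move=> HU HL HM HA HB HC HAB HAC HBC H8.
have HA3 : #|A| = 3 by apply: HU; apply: (subsetP (MF HM)).
have [x0 _] : exists x0, x0 \in A by apply/card_gt0P; rewrite HA3.
have l1 := D2AB_le9 x0 HU HL HM HA HC HAC.
have l2 := D2AB_le9 x0 HU HL HM HB HC HBC.
have z1 : 7 <= #|D2AB F M B C| -> #|D2AB F M A C| = 0.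
  move=> H7; apply/eqP; rewrite eqn0Ngt; apply/negP => /card_gt0P [E HE].
  have H8' : #|D2AB F M B A| = 8 by rewrite D2AB_sym.
  by apply: (L HU HL HM x0 HB HA HC _ HBC HAC H8' H7 HE); rewrite eq_sym.
have z2 : 7 <= #|D2AB F M A C| -> #|D2AB F M B C| = 0.
  move=> H7; apply/eqP; rewrite eqn0Ngt; apply/negP => /card_gt0P [E HE].
  exact: (L HU HL HM x0 HA HB HC HAB HAC HBC H8 H7 HE).
case: (leqP 7 #|D2AB F M A C|) => h1.
  rewrite (z2 h1) addn0; exact: leq_trans l1 _.
case: (leqP 7 #|D2AB F M B C|) => h2.
  rewrite (z1 h2) add0n; exact: leq_trans l2 _.
have e12 : 12 = 6 + 6 by [].
rewrite e12; apply: leq_add; by rewrite -ltnS.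
Qed.
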